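(* Let $\mathcal{L}$, $\mathcal{C}$, $\mathcal{M}$, the types $\sigma_C,\rho_C,\sigma_M,\rho^1_M,\rho^2_M$, the label sets $L_M$ and the repository $\Delta^{\mathcal{C},\mathcal{M}}_{\mathcal{L}}$ be as in the context. Let $\Gamma$ be a finite basis with $\Gamma\subseteq\{x_C:\sigma_C\to\rho_C\mid C\in\mathcal{C}\}\cup\{x^{\rho}_M:(\sigma_M\to\rho\cap\rho^1_M)\to(\sigma_M\to\rho+\rho^2_M)\mid M\in\mathcal{M},\ \rho\in\mathbb{T}_R,\ [\![\rho]\!]\text{ defined}\}$ (where $x_C$, $x^\rho_M$ are distinct term variables), and let $\sigma\in\mathbb{T}$, $\rho\in\mathbb{T}_R$ be such that $[\![\sigma\to\rho]\!]$ is defined. Let $k=\max(\{\mathrm{level}([\![\rho_C]\!])\mid C\in\mathcal{C}\}\cup\{\mathrm{level}([\![\rho^2_M]\!])\mid M\in\mathcal{M}\}\cup\{\mathrm{level}([\![\rho]\!])\})$. Let $M_1,\ldots,M_n\in\mathcal{M}$ and $C\in\mathcal{C}$. If $\Gamma\vdash x_C\triangleright x^{\rho_1}_{M_1}\triangleright\cdots\triangleright x^{\rho_n}_{M_n}:\sigma\to\rho$ in the type assignment system for $\Lambda_R$, then $\Delta^{\mathcal{C},\mathcal{M}}_{\mathcal{L}}\vdash_k C\triangleright M_1\triangleright\cdots\triangleright M_n:[\![\sigma\to\rho]\!]$ in $\mathsf{BCL}_k(\mathbb{T}_C)$.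
   Context: \textbf{The calculus $\Lambda_R$.} Terms: $M,N ::= x \mid \lambda x.M \mid MN \mid M.l \mid R \mid M\oplus R$, records $R ::= \langle l_i = M_i \mid i\in I\rangle$ ($I$ finite, labels pairwise distinct), $\mathit{lbl}(\langle l_i=M_i\mid i\in I\rangle)=\{l_i\mid i\in I\}$. $\mathbf{Y}=\lambda f.(\lambda x.f(xx))(\lambda x.f(xx))$. A class is a closed term $\mathbf{Y}(\lambda\,\mathit{myClass}\,\lambda\,\mathit{state}.\,R)$; a mixin is a closed term $\lambda\,\mathit{argClass}.\,\mathbf{Y}(\lambda\,\mathit{myClass}\,\lambda\,\mathit{state}.\,(\mathit{argClass}\;\mathit{state})\oplus R_M)$ with $R_M$ a record. \textbf{Types for $\Lambda_R$.} $\mathbb{T}\ni\sigma ::= a\mid\omega\mid\sigma_1\to\sigma_2\mid\sigma_1\cap\sigma_2\mid\rho$, $\mathbb{T}_R\ni\rho ::= \langle\rangle\mid\langle l:\sigma\rangle\mid\rho_1+\rho_2\mid\rho_1\cap\rho_2$. Subtyping $\le$ is the least preorder with: $\sigma\le\omega$; $\omega\le\omega\to\omega$; $\sigma\cap\tau\le\sigma$; $\sigma\cap\tau\le\tau$; $\sigma\le\tau_1,\sigma\le\tau_2\Rightarrow\sigma\le\tau_1\cap\tau_2$; $(\sigma\to\tau_1)\cap(\sigma\to\tau_2)\le\sigma\to\tau_1\cap\tau_2$; $\sigma_2\le\sigma_1,\tau_1\le\tau_2\Rightarrow\sigma_1\to\tau_1\le\sigma_2\to\tau_2$; $\langle l:\sigma\rangle\le\langle\rangle$;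 $\langle l:\sigma\rangle\cap\langle l:\tau\rangle\le\langle l:\sigma\cap\tau\rangle$; $\sigma\le\tau\Rightarrow\langle l:\sigma\rangle\le\langle l:\tau\rangle$; $\rho+\langle\rangle=\langle\rangle+\rho=\rho$; $(\rho_1+\rho_2)+\rho_3=\rho_1+(\rho_2+\rho_3)$; $(\rho_1\cap\rho_2)+\rho_3=(\rho_1+\rho_3)\cap(\rho_2+\rho_3)$; $\langle l:\sigma\rangle+(\langle l:\tau\rangle\cap\rho)=\langle l:\tau\rangle\cap\rho$; $\langle l:\sigma\rangle+(\langle l':\tau\rangle\cap\rho)=\langle l':\tau\rangle\cap(\langle l:\sigma\rangle+\rho)$ if $l\neq l'$; $\rho_1\le\rho_2\Rightarrow\rho_1+\rho\le\rho_2+\rho$; $\rho_1=\rho_2\Rightarrow\rho+\rho_1=\rho+\rho_2$ ($=$ meaning $\le$ both ways). $\mathit{lbl}(\langle\rangle)=\emptyset$, $\mathit{lbl}(\langle l:\sigma\rangle)=\{l\}$, $\mathit{lbl}(\rho_1\cap\rho_2)=\mathit{lbl}(\rho_1+\rho_2)=\mathit{lbl}(\rho_1)\cup\mathit{lbl}(\rho_2)$. \textbf{Type assignment for $\Lambda_R$}: variable axiom from the basis; $\to$-introduction/elimination; $\cap$-introduction; $\Gamma\vdash M:\omega$; subsumption along $\le$; $\Gamma\vdash\langle l_i=M_i\mid i\in I\rangle:\langle\rangle$; from $\Gamma\vdash M_k:\sigma$, $k\in I$ infer $\Gamma\vdash\langle l_i=M_i\mid i\in I\rangle:\langle l_k:\sigma\rangle$;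 from $\Gamma\vdash M:\langle l:\sigma\rangle$ infer $\Gamma\vdash M.l:\sigma$; from $\Gamma\vdash M:\rho_1$, $\Gamma\vdash R:\rho_2$, $\mathit{lbl}(R)=\mathit{lbl}(\rho_2)$ infer $\Gamma\vdash M\oplus R:\rho_1+\rho_2$. \textbf{$\mathsf{BCL}_k(\mathbb{T}_C)$.} Types $\mathbb{T}_C\ni\tau ::= a\mid\alpha\mid\omega\mid\tau_1\to\tau_2\mid\tau_1\cap\tau_2\mid c(\tau)$; subtyping: the arrow/intersection axioms above plus $\tau_1\le\tau_2\Rightarrow c(\tau_1)\le c(\tau_2)$ and $c(\tau_1)\cap c(\tau_2)\le c(\tau_1\cap\tau_2)$. Level: $0$ for $\omega,a,\alpha$; $\mathrm{level}(c(\tau))=1+\mathrm{level}(\tau)$; $\mathrm{level}(\sigma\to\tau)=1+\max(\mathrm{level}(\sigma),\mathrm{level}(\tau))$; $\mathrm{level}(\sigma\cap\tau)=\max(\mathrm{level}(\sigma),\mathrm{level}(\tau))$; $\mathrm{level}(S)=\max_{\alpha\in\mathrm{dom}(S)}\mathrm{level}(S(\alpha))$ for substitutions $S$. A repository $\Delta$ is a finite set of $C:\tau$; combinatory terms $E::=C\mid(E\,E')$. Rules: from $C:\tau\in\Delta$, $\mathrm{level}(S)\le k$ infer $\Delta\vdash_k C:S(\tau)$; $\to$-elimination; $\cap$-introduction; subsumption. \textbf{Translation.} Fixed finite label set $\mathcal{L}$, unary constructors $\langle\!\langle\cdot\rangle\!\rangle$ and $l(\cdot)$ for $l\in\mathcal{L}$;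 partial map $[\![\omega]\!]=\omega$, $[\![a]\!]=a$, $[\![\sigma\to\tau]\!]=[\![\sigma]\!]\to[\![\tau]\!]$, $[\![\sigma\cap\tau]\!]=[\![\sigma]\!]\cap[\![\tau]\!]$, $[\![\langle l:\tau\rangle]\!]=\langle\!\langle l([\![\tau]\!])\rangle\!\rangle$, $[\![\langle\rangle]\!]=\langle\!\langle\omega\rangle\!\rangle$; undefined on types containing $+$. \textbf{Setting.} $\mathcal{C}$ finite set of classes with $\sigma_C,\rho_C$, $[\![\sigma_C\to\rho_C]\!]$ defined, $\vdash C:\sigma_C\to\rho_C$. $\mathcal{M}$ finite set of mixins with $\sigma_M,\rho^1_M,\rho^2_M$ whose translations are defined and such that for all $\rho\in\mathbb{T}_R$, $\vdash M:(\sigma_M\to\rho\cap\rho^1_M)\to(\sigma_M\to\rho+\rho^2_M)$; $L_M=\mathit{lbl}(\rho^2_M)\subseteq\mathcal{L}$ non-empty, the labels defined by $M$. Repository $\Delta^{\mathcal{C},\mathcal{M}}_{\mathcal{L}}=\{C:[\![\sigma_C\to\rho_C]\!]\}\cup\{M:(([\![\sigma_M]\!]\to[\![\rho^1_M]\!])\to([\![\sigma_M]\!]\to[\![\rho^2_M]\!]))\cap\bigcap_{l\in\mathcal{L}\setminus L_M}(([\![\sigma_M]\!]\to\langle\!\langle l(\alpha_l)\rangle\!\rangle)\to([\![\sigma_M]\!]\to\langle\!\langle l(\alpha_l)\rangle\!\rangle))\}$. $x\triangleright f$ means $f\,x$, left associative. *)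

(* Defs.v *)
From Stdlib Require Import List Arith PeanoNat.
Import ListNotations.

Definition label := nat.
Definition var := nat.

Inductive term : Type :=
| Var (x : var)
| Lam (x : var) (M : term)
| App (M N : term)
| Sel (M : term) (l : label)
| Rec (r : list (label * term))
| Ext (M : term) (r : list (label * term)).

Fixpoint fv (t : term) : list var :=
  match t with
  | Var x => [x]
  | Lam x M => remove Nat.eq_dec x (fv M)
  | App M N => fv M ++ fv N
  | Sel M _ => fv M
  | Rec r => (fix g (r : list (label * term)) : list var :=
                match r with [] => [] | (_, M) :: r' => fv M ++ g r' end) r
  | Ext M r => fv M ++ (fix g (r : list (label * term)) : list var :=
                match r with [] => [] | (_, M) :: r' => fv M ++ g r' end) r
  end.

Definition closed (t : term) : Prop := fv t = [].

Fixpoint wf_term (t : term) : Prop :=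
  match t with
  | Var _ => True
  | Lam _ M => wf_term M
  | App M N => wf_term M /\ wf_term N
  | Sel M _ => wf_term M
  | Rec r => NoDup (map fst r) /\
      (fix g (r : list (label * term)) : Prop :=
         match r with [] => True | (_, M) :: r' => wf_term M /\ g r' end) r
  | Ext M r => wf_term M /\ NoDup (map fst r) /\
      (fix g (r : list (label * term)) : Prop :=
         match r with [] => True | (_, M) :: r' => wf_term M /\ g r' end) r
  end.

Definition Ycomb (f x : var) : term :=
  Lam f (App (Lam x (App (Var f) (App (Var x) (Var x))))
             (Lam x (App (Var f) (App (Var x) (Var x))))).

Definition is_class (C : term) : Prop :=
  closed C /\ wf_term C /\
  exists f x mc st r, f <> x /\ C = App (Ycomb f x) (Lam mc (Lam st (Rec r))).

Definition is_mixin (M : term) : Prop :=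
  closed M /\ wf_term M /\
  exists ac f x mc st r, f <> x /\
    M = Lam ac (App (Ycomb f x)
                    (Lam mc (Lam st (Ext (App (Var ac) (Var st)) r)))).

Inductive ty : Type :=
| TAtom (a : nat)
| TOmega
| TArr (s t : ty)
| TInt (s t : ty)
| TEmpty
| TField (l : label) (s : ty)
| TPlus (r1 r2 : ty).

(* wf_ty s : s in T ;  is_rty r : r in T_R *)
Fixpoint wf_ty (s : ty) : bool :=
  match s with
  | TAtom _ | TOmega | TEmpty => true
  | TArr a b | TInt a b => wf_ty a && wf_ty b
  | TField _ a => wf_ty a
  | TPlus a b => is_rty a && is_rty b
  end
with is_rty (r : ty) : bool :=
  match r with
  | TEmpty => true
  | TField _ a => wf_ty a
  | TPlus a b | TInt a b => is_rty a && is_rty b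
  | _ => false
  end.

Fixpoint lbl_ty (r : ty) : list label :=
  match r with
  | TField l _ => [l]
  | TPlus a b | TInt a b => lbl_ty a ++ lbl_ty b
  | _ => []
  end.

Definition same_labels (a b : list label) : Prop := forall l, In l a <-> In l b.

Inductive sub : ty -> ty -> Prop :=
| sub_refl s : wf_ty s = true -> sub s s
| sub_trans s t u : sub s t -> sub t u -> sub s u
| sub_omega s : wf_ty s = true -> sub s TOmega
| sub_omega_arr : sub TOmega (TArr TOmega TOmega)
| sub_int_l s t : wf_ty s = true -> wf_ty t = true -> sub (TInt s t) s
| sub_int_r s t : wf_ty s = true -> wf_ty t = true -> sub (TInt s t) t
| sub_int_glb s t1 t2 : sub s t1 -> sub s t2 -> sub s (TInt t1 t2)
| sub_arr_dist s t1 t2 : wf_ty s = true -> wf_ty t1 = true -> wf_ty t2 = true ->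
    sub (TInt (TArr s t1) (TArr s t2)) (TArr s (TInt t1 t2))
| sub_arr s1 s2 t1 t2 : sub s2 s1 -> sub t1 t2 -> sub (TArr s1 t1) (TArr s2 t2)
| sub_field_empty l s : wf_ty s = true -> sub (TField l s) TEmpty
| sub_field_int l s t : wf_ty s = true -> wf_ty t = true ->
    sub (TInt (TField l s) (TField l t)) (TField l (TInt s t))
| sub_field l s t : sub s t -> sub (TField l s) (TField l t)
| sub_plus_empty_r1 r : is_rty r = true -> sub (TPlus r TEmpty) r
| sub_plus_empty_r2 r : is_rty r = true -> sub r (TPlus r TEmpty)
| sub_plus_empty_l1 r : is_rty r = true -> sub (TPlus TEmpty r) r
| sub_plus_empty_l2 r : is_rty r = true -> sub r (TPlus TEmpty r)
| sub_plus_assoc1 r1 r2 r3 : is_rty r1 = true -> is_rty r2 = true -> is_rty r3 = true ->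
    sub (TPlus (TPlus r1 r2) r3) (TPlus r1 (TPlus r2 r3))
| sub_plus_assoc2 r1 r2 r3 : is_rty r1 = true -> is_rty r2 = true -> is_rty r3 = true ->
    sub (TPlus r1 (TPlus r2 r3)) (TPlus (TPlus r1 r2) r3)
| sub_plus_dist1 r1 r2 r3 : is_rty r1 = true -> is_rty r2 = true -> is_rty r3 = true ->
    sub (TPlus (TInt r1 r2) r3) (TInt (TPlus r1 r3) (TPlus r2 r3))
| sub_plus_dist2 r1 r2 r3 : is_rty r1 = true -> is_rty r2 = true -> is_rty r3 = true ->
    sub (TInt (TPlus r1 r3) (TPlus r2 r3)) (TPlus (TInt r1 r2) r3)
| sub_plus_same1 l s t r : wf_ty s = true -> wf_ty t = true -> is_rty r = true ->
    sub (TPlus (TField l s) (TInt (TField l t) r)) (TInt (TField l t) r)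
| sub_plus_same2 l s t r : wf_ty s = true -> wf_ty t = true -> is_rty r = true ->
    sub (TInt (TField l t) r) (TPlus (TField l s) (TInt (TField l t) r))
| sub_plus_diff1 l l' s t r : l <> l' -> wf_ty s = true -> wf_ty t = true -> is_rty r = true ->
    sub (TPlus (TField l s) (TInt (TField l' t) r)) (TInt (TField l' t) (TPlus (TField l s) r))
| sub_plus_diff2 l l' s t r : l <> l' -> wf_ty s = true -> wf_ty t = true -> is_rty r = true ->
    sub (TInt (TField l' t) (TPlus (TField l s) r)) (TPlus (TField l s) (TInt (TField l' t) r))
| sub_plus_mono_l r1 r2 r : is_rty r1 = true -> is_rty r2 = true -> is_rty r = true ->
    sub r1 r2 -> sub (TPlus r1 r) (TPlus r2 r)
| sub_plus_cong_r r r1 r2 : is_rty r = true -> is_rty r1 = true -> is_rty r2 = true ->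
    sub r1 r2 -> sub r2 r1 -> sub (TPlus r r1) (TPlus r r2).

Definition basis := list (var * ty).

Definition ext_basis (G : basis) (x : var) (s : ty) : basis :=
  (x, s) :: filter (fun p => negb (Nat.eqb (fst p) x)) G.

Inductive typed : basis -> term -> ty -> Prop :=
| ty_var G x s : In (x, s) G -> typed G (Var x) s
| ty_abs G x M s t : wf_ty s = true -> typed (ext_basis G x s) M t ->
    typed G (Lam x M) (TArr s t)
| ty_app G M N s t : typed G M (TArr s t) -> typed G N s -> typed G (App M N) t
| ty_int G M s t : typed G M s -> typed G M t -> typed G M (TInt s t)
| ty_omega G M : typed G M TOmega
| ty_sub G M s t : typed G M s -> sub s t -> typed G M t
| ty_rec_empty G r : typed G (Rec r) TEmpty
| ty_rec_field G r l M s : In (l, M) r -> typed G M s -> typed G (Rec r) (TField l s)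
| ty_sel G M l s : typed G M (TField l s) -> typed G (Sel M l) s
| ty_ext G M r r1 r2 : is_rty r1 = true -> is_rty r2 = true ->
    typed G M r1 -> typed G (Rec r) r2 ->
    same_labels (map fst r) (lbl_ty r2) ->
    typed G (Ext M r) (TPlus r1 r2).

Inductive ctor : Type :=
| CRec
| CLab (l : label).

Inductive cty : Type :=
| CAtom (a : nat)
| CTVar (alpha : nat)
| COmega
| CArr (s t : cty)
| CInt (s t : cty)
| CCons (c : ctor) (t : cty).

Fixpoint level (t : cty) : nat :=
  match t with
  | CAtom _ | CTVar _ | COmega => 0
  | CCons _ t => S (level t)
  | CArr s t => S (Nat.max (level s) (level t))
  | CInt s t => Nat.max (level s) (level t)
  end.

Fixpoint csubst (S : nat -> cty) (t : cty) : cty :=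
  match t with
  | CTVar a => S a
  | CArr s t => CArr (csubst S s) (csubst S t)
  | CInt s t => CInt (csubst S s) (csubst S t)
  | CCons c t => CCons c (csubst S t)
  | _ => t
  end.

Inductive csub : cty -> cty -> Prop :=
| csub_refl s : csub s s
| csub_trans s t u : csub s t -> csub t u -> csub s u
| csub_omega s : csub s COmega
| csub_omega_arr : csub COmega (CArr COmega COmega)
| csub_int_l s t : csub (CInt s t) s
| csub_int_r s t : csub (CInt s t) t
| csub_int_glb s t1 t2 : csub s t1 -> csub s t2 -> csub s (CInt t1 t2)
| csub_arr_dist s t1 t2 : csub (CInt (CArr s t1) (CArr s t2)) (CArr s (CInt t1 t2))
| csub_arr s1 s2 t1 t2 : csub s2 s1 -> csub t1 t2 -> csub (CArr s1 t1) (CArr s2 t2)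
| csub_cons c s t : csub s t -> csub (CCons c s) (CCons c t)
| csub_cons_int c s t : csub (CInt (CCons c s) (CCons c t)) (CCons c (CInt s t)).

(* combinatory terms; combinators are named by the classes / mixins themselves *)
Inductive cterm : Type :=
| Comb (c : term)
| CApp (E F : cterm).

Definition repository := list (term * cty).

(* Delta |-_k E : t.  Substitutions are total maps with level(S) <= k,
   i.e. every S alpha has level <= k (identity outside the domain has level 0). *)
Inductive ctyped (D : repository) (k : nat) : cterm -> cty -> Prop :=
| cty_var c t (S : nat -> cty) : In (c, t) D -> (forall a, level (S a) <= k) ->
    ctyped D k (Comb c) (csubst S t)
| cty_app E F s t : ctyped D k E (CArr s t) -> ctyped D k F s -> ctyped D k (CApp E F) t
| cty_int E s t : ctyped D k E s -> ctyped D k E t -> ctyped D k E (CInt s t)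
| cty_sub E s t : ctyped D k E s -> csub s t -> ctyped D k E t.

Fixpoint tr (Ls : list label) (s : ty) : option cty :=
  match s with
  | TOmega => Some COmega
  | TAtom a => Some (CAtom a)
  | TArr a b => match tr Ls a, tr Ls b with
                | Some a', Some b' => Some (CArr a' b') | _, _ => None end
  | TInt a b => match tr Ls a, tr Ls b with
                | Some a', Some b' => Some (CInt a' b') | _, _ => None end
  | TField l a => if existsb (Nat.eqb l) Ls then
                    match tr Ls a with
                    | Some a' => Some (CCons CRec (CCons (CLab l) a'))
                    | None => None end
                  else None
  | TEmpty => Some (CCons CRec COmega)
  | TPlus _ _ => None
  end.

Definition tr_defined (Ls : list label) (s : ty) : Prop := tr Ls s <> None.

(* total version, used only on types whose translation is defined *)
Definition trd (Ls : list label) (s : ty) : cty :=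
  match tr Ls s with Some t => t | None => COmega end.

Definition mixin_cty (Ls : list label) (sM r1M r2M : ty) : cty :=
  fold_left
    (fun acc l =>
       CInt acc (CArr (CArr (trd Ls sM) (CCons CRec (CCons (CLab l) (CTVar l))))
                      (CArr (trd Ls sM) (CCons CRec (CCons (CLab l) (CTVar l))))))
    (filter (fun l => negb (existsb (Nat.eqb l) (lbl_ty r2M))) Ls)
    (CArr (CArr (trd Ls sM) (trd Ls r1M)) (CArr (trd Ls sM) (trd Ls r2M))).

Definition repo (Ls : list label) (Cs Ms : list term)
  (sigC rhoC sigM rho1M rho2M : term -> ty) : repository :=
  map (fun C => (C, trd Ls (TArr (sigC C) (rhoC C)))) Cs ++
  map (fun M => (M, mixin_cty Ls (sigM M) (rho1M M) (rho2M M))) Ms.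

Definition pipe_vars (x0 : var) (fs : list var) : term :=
  fold_left (fun acc f => App (Var f) acc) fs (Var x0).

Definition pipe_combs (C : term) (Ms : list term) : cterm :=
  fold_left (fun acc M => CApp (Comb M) acc) Ms (Comb C).

(* Main.v *)
Require Import Defs.
From Stdlib Require Import List Arith PeanoNat Bool Lia.
Import ListNotations.

Lemma rty_wf : forall r, is_rty r = true -> wf_ty r = true.
Proof.
  induction r; simpl; intros H; try discriminate; auto.
  apply andb_true_iff in H as [H1 H2]; rewrite IHr1, IHr2; auto.
Qed.

Lemma sub_wf : forall u v, sub u v -> wf_ty u = true /\ wf_ty v = true.
Proof.
  induction 1; simpl in *; rewrite ?andb_true_iff in *;
  intuition (auto using rty_wf).
Qed.

Fixpoint Vo (t : ty) : bool :=
  match t with TOmega => true | TArr _ b => Vo b | TInt a b => Vo a && Vo b | _ => false end.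

Lemma rty_Vo : forall r, is_rty r = true -> Vo r = false.
Proof.
  induction r; simpl; intros H; try discriminate; auto.
  apply andb_true_iff in H as [H1 H2]; rewrite IHr1; auto.
Qed.

Lemma sub_Vo : forall u v, sub u v -> Vo u = true -> Vo v = true.
Proof.
  induction 1; simpl; intros HV; simpl in HV; rewrite ?andb_true_iff in *;
  repeat match goal with H : is_rty ?r = true, H' : Vo ?r = true |- _ =>
    rewrite (rty_Vo r H) in H'; discriminate end;
  intuition (try discriminate).
Qed.

Lemma no_omega_rty : forall r, is_rty r = true -> ~ sub TOmega r.
Proof.
  intros r H Hs. apply sub_Vo in Hs; [|reflexivity]. rewrite rty_Vo in Hs; auto; discriminate.
Qed.

Fixpoint comps (t : ty) : list (ty * ty) :=
  match t with TArr a b => [(a, b)] | TInt a b => comps a ++ comps b | _ => [] end.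

Fixpoint bigint (l : list ty) : ty :=
  match l with [] => TOmega | x :: l => TInt x (bigint l) end.

Lemma rty_comps : forall r, is_rty r = true -> comps r = [].
Proof.
  induction r; simpl; intros H; try discriminate; auto.
  apply andb_true_iff in H as [H1 H2]; rewrite IHr1, IHr2; auto.
Qed.

Lemma comps_wf : forall u p, wf_ty u = true -> In p (comps u) ->
  wf_ty (fst p) = true /\ wf_ty (snd p) = true.
Proof.
  induction u; simpl; intros p Hw Hin; try contradiction.
  - destruct Hin as [<-|[]]. simpl. apply andb_true_iff in Hw; tauto.
  - apply andb_true_iff in Hw as [H1 H2]. apply in_app_or in Hin as [H|H]; eauto.
Qed.

Lemma bigint_wf : forall l, (forall x, In x l -> wf_ty x = true) -> wf_ty (bigint l) = true.
Proof.
  induction l; simpl; intros H; auto.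
  rewrite H, IHl; auto.
Qed.

Lemma bigint_glb : forall u l, wf_ty u = true -> (forall x, In x l -> sub u x) -> sub u (bigint l).
Proof.
  induction l; simpl; intros Hw H.
  - apply sub_omega; auto.
  - apply sub_int_glb; auto.
Qed.

Lemma bigint_In : forall l x, (forall y, In y l -> wf_ty y = true) -> In x l -> sub (bigint l) x.
Proof.
  induction l; simpl; intros x Hw Hin; [contradiction|].
  assert (wf_ty (bigint l) = true) by (apply bigint_wf; auto).
  destruct Hin as [<-|Hin].
  - apply sub_int_l; auto.
  - eapply sub_trans; [apply sub_int_r; auto|]. apply IHl; auto.
Qed.

Definition R (s u t : ty) : Prop :=
  exists sel, (forall p, In p sel -> In p (comps u) /\ sub s (fst p)) /\
    sub (bigint (map snd sel)) t.

Lemma R_up : forall s u t t', R s u t -> sub t t' -> R s u t'.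
Proof. intros s u t t' [sel [H1 H2]] H. exists sel; split; auto. eapply sub_trans; eauto. Qed.



Lemma sel_wf : forall s u sel, wf_ty u = true ->
  (forall p, In p sel -> In p (comps u) /\ sub s (fst p)) ->
  forall y, In y (map snd sel) -> wf_ty y = true.
Proof.
  intros s u sel Hw H y Hy. apply in_map_iff in Hy as [p [<- Hp]].
  apply (comps_wf u); auto. apply H; auto.
Qed.

Lemma R_glb : forall s u l, wf_ty u = true -> (forall x, In x l -> R s u x) -> R s u (bigint l).
Proof.
  induction l; simpl; intros Hw H.
  - exists []; split; simpl; [intros; contradiction| apply sub_refl; reflexivity].
  - destruct (H a (or_introl eq_refl)) as [m1 [Hm1 Hs1]].
    destruct IHl as [m2 [Hm2 Hs2]]; auto.
    exists (m1 ++ m2); split.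
    + intros p Hp; apply in_app_or in Hp as [Hp|Hp]; auto.
    + assert (Hwa : forall y, In y (map snd (m1 ++ m2)) -> wf_ty y = true).
      { apply (sel_wf s u); auto. intros p Hp; apply in_app_or in Hp as [Hp|Hp]; auto. }
      assert (Hwb : wf_ty (bigint (map snd (m1 ++ m2))) = true) by (apply bigint_wf; auto).
      apply sub_int_glb.
      * eapply sub_trans; [|exact Hs1]. apply bigint_glb; auto.
        intros x Hx. apply bigint_In; auto. rewrite map_app; apply in_or_app; auto.
      * eapply sub_trans; [|exact Hs2]. apply bigint_glb; auto.
        intros x Hx. apply bigint_In; auto. rewrite map_app; apply in_or_app; auto.
Qed.

Lemma R_from_elems : forall s u v t, wf_ty u = true -> R s v t ->
  (forall p, In p (comps v) -> sub s (fst p) -> R s u (snd p)) -> R s u t.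
Proof.
  intros s u v t Hw [sel [H1 H2]] H.
  eapply R_up; [|exact H2]. apply R_glb; auto.
  intros x Hx. apply in_map_iff in Hx as [p [<- Hp]]. apply H; apply H1; auto.
Qed.

Lemma R_single : forall s u p, In p (comps u) -> sub s (fst p) -> wf_ty (snd p) = true ->
  R s u (snd p).
Proof.
  intros s u p Hin Hs Hw. exists [p]; split.
  - intros q [<-|[]]; auto.
  - simpl. apply sub_int_l; auto.
Qed.

Lemma R_mono : forall u v, sub u v -> forall s t, R s v t -> R s u t.
Proof.
  intros u v Huv. induction Huv; intros s0 t0 HR; auto;
  try (assert (Hw := sub_wf _ _ ltac:(eassumption)));
  try (eapply R_from_elems; [ | exact HR | ];
       [ try (simpl; rewrite ?andb_true_iff; intuition (auto using rty_wf); fail)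
       | simpl; try rewrite rty_comps by auto; simpl; intros; contradiction ]; fail).
  -
    eapply R_from_elems; [reflexivity|exact HR|].
    intros p [<-|[]] _. exists []; split; simpl; [intros; contradiction|apply sub_refl; reflexivity].
  -
    eapply R_from_elems; [simpl; rewrite H, H0; reflexivity|exact HR|].
    intros p Hp Hs. apply R_single; [simpl; apply in_or_app; auto|auto|].
    apply (comps_wf s); auto.
  - eapply R_from_elems; [simpl; rewrite H, H0; reflexivity|exact HR|].
    intros p Hp Hs. apply R_single; [simpl; apply in_or_app; auto|auto|].
    apply (comps_wf t); auto.
  -
    destruct (sub_wf _ _ Huv1) as [Hws Hw1]. destruct (sub_wf _ _ Huv2) as [_ Hw2].
    eapply R_from_elems; [auto|exact HR|].
    intros p Hp Hs. simpl in Hp. apply in_app_or in Hp as [Hp|Hp].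
    + apply IHHuv1. apply R_single; auto. apply (comps_wf t1); auto.
    + apply IHHuv2. apply R_single; auto. apply (comps_wf t2); auto.
  -
    eapply R_from_elems; [simpl; rewrite H, H0, H1; reflexivity|exact HR|].
    intros p [<-|[]] Hs. simpl in *.
    exists [(s, t1); (s, t2)]; split.
    + intros q [<-|[<-|[]]]; simpl; auto.
    + simpl. apply sub_int_glb.
      * apply sub_int_l; auto. simpl; rewrite H1; auto.
      * eapply sub_trans; [apply sub_int_r; auto; simpl; rewrite H1; auto|].
        apply sub_int_l; auto.
  -
    destruct (sub_wf _ _ Huv1) as [Hw2 Hw1]. destruct (sub_wf _ _ Huv2) as [Hw3 Hw4].
    eapply R_from_elems; [simpl; rewrite Hw1, Hw3; reflexivity|exact HR|].
    intros p [<-|[]] Hs. simpl in *.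
    exists [(s1, t1)]; split.
    + intros q [<-|[]]; simpl; split; auto. eapply sub_trans; eauto.
    + simpl. eapply sub_trans; [apply sub_int_l; auto|auto].
Qed.

Lemma arr_inv : forall X Y s t, sub (TArr X Y) (TArr s t) ->
  (sub s X /\ sub Y t) \/ sub TOmega t.
Proof.
  intros X Y s t H.
  destruct (sub_wf _ _ H) as [Hw1 Hw2]. simpl in Hw1, Hw2.
  apply andb_true_iff in Hw1 as [HX HY]. apply andb_true_iff in Hw2 as [Hs Ht].
  assert (HR : R s (TArr s t) t).
  { apply (R_single s (TArr s t) (s, t)); simpl; auto. apply sub_refl; auto. }
  apply (R_mono _ _ H) in HR. destruct HR as [sel [H1 H2]].
  destruct sel as [|p sel].
  - right; exact H2.
  - left. destruct (H1 p (or_introl eq_refl)) as [[<-|[]] Hs']. simpl in *.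
    split; auto. eapply sub_trans; [|exact H2].
    apply sub_int_glb; [apply sub_refl; auto|].
    apply bigint_glb; auto. intros x Hx. apply in_map_iff in Hx as [q [<- Hq]].
    destruct (H1 q (or_intror Hq)) as [[<-|[]] _]. apply sub_refl; auto.
Qed.

Lemma omega_arr_inv : forall s t, sub TOmega (TArr s t) -> sub TOmega t.
Proof.
  intros s t H.
  destruct (sub_wf _ _ H) as [_ Hw2]. simpl in Hw2.
  apply andb_true_iff in Hw2 as [Hs Ht].
  assert (HR : R s (TArr s t) t).
  { apply (R_single s (TArr s t) (s, t)); simpl; auto. apply sub_refl; auto. }
  apply (R_mono _ _ H) in HR. destruct HR as [sel [H1 H2]].
  destruct sel as [|p sel]; auto. destruct (H1 p (or_introl eq_refl)) as [[] _].
Qed.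

Lemma sub_lbl : forall u v, sub u v -> incl (lbl_ty v) (lbl_ty u).
Proof.
  induction 1; unfold incl in *; intros x; simpl in *; rewrite ?in_app_iff in *; simpl in *;
  rewrite ?in_app_iff in *; firstorder.
Qed.

(* translation with dropped labels *)
Fixpoint T (L : list label) (s : ty) : cty :=
  match s with
  | TAtom a => CAtom a
  | TOmega => COmega
  | TArr a b => CArr (T [] a) (T [] b)
  | TInt a b => CInt (T L a) (T L b)
  | TEmpty => CCons CRec COmega
  | TField l a => if existsb (Nat.eqb l) L then CCons CRec COmega
                  else CCons CRec (CCons (CLab l) (T [] a))
  | TPlus a b => CInt (T (lbl_ty b ++ L) a) (T L b)
  end.

Lemma memb_In : forall l L, existsb (Nat.eqb l) L = true <-> In l L.
Proof.
  intros l L. rewrite existsb_exists. split.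
  - intros [x [Hx He]]. apply Nat.eqb_eq in He; subst; auto.
  - intros H; exists l; split; auto. apply Nat.eqb_refl.
Qed.

Lemma T_ext : forall s L L', (forall l, existsb (Nat.eqb l) L = existsb (Nat.eqb l) L') ->
  T L s = T L' s.
Proof.
  induction s; simpl; intros L L' H; auto.
  - rewrite (IHs1 L L'), (IHs2 L L'); auto.
  - rewrite H; auto.
  - rewrite (IHs1 _ (lbl_ty s2 ++ L')), (IHs2 L L'); auto.
    intros l; rewrite !existsb_app, H; auto.
Qed.

Lemma rty_T_le : forall r L, is_rty r = true -> csub (T L r) (CCons CRec COmega).
Proof.
  induction r; simpl; intros L H; try discriminate.
  - apply andb_true_iff in H as [H1 H2]. eapply csub_trans; [apply csub_int_l|]; auto.
  - apply csub_refl.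
  - destruct existsb; [apply csub_refl|apply csub_cons, csub_omega].
  - apply andb_true_iff in H as [H1 H2]. eapply csub_trans; [apply csub_int_r|]; auto.
Qed.

Ltac ci := first
  [ apply csub_refl
  | apply csub_omega
  | eassumption
  | apply csub_int_glb; ci
  | eapply csub_trans; [apply csub_int_l | ci]
  | eapply csub_trans; [apply csub_int_r | ci] ].

Lemma T_sub : forall u v, sub u v -> forall L, csub (T L u) (T L v).
Proof.
  induction 1; intros L; simpl.
  - apply csub_refl.
  - eapply csub_trans; eauto.
  - apply csub_omega.
  - apply csub_omega_arr.
  - apply csub_int_l.
  - apply csub_int_r.
  - apply csub_int_glb; auto.
  - apply csub_arr_dist.
  - apply csub_arr; auto.
  - destruct existsb; [apply csub_refl|apply csub_cons, csub_omega].
  - destruct existsb; [apply csub_int_l|].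
    eapply csub_trans; [apply csub_cons_int|]. apply csub_cons, csub_cons_int.
  - destruct existsb; [apply csub_refl|]. apply csub_cons, csub_cons; auto.
  - apply csub_int_l.
  - apply csub_int_glb; [apply csub_refl|apply rty_T_le; auto].
  - apply csub_int_r.
  - apply csub_int_glb; [apply rty_T_le; auto|apply csub_refl].
  - rewrite <- app_assoc. ci.
  - rewrite <- app_assoc. ci.
  - ci.
  - ci.
  - rewrite Nat.eqb_refl; simpl. apply csub_int_r.
  - rewrite Nat.eqb_refl; simpl. apply csub_int_glb; [|apply csub_refl].
    eapply csub_trans; [apply csub_int_l|]. apply (rty_T_le (TField l t)); auto.
  - apply Nat.eqb_neq in H. rewrite ?H; rewrite Nat.eqb_sym in H; rewrite ?H. simpl. ci.
  - apply Nat.eqb_neq in H. rewrite ?H; rewrite Nat.eqb_sym in H; rewrite ?H; simpl. ci.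
  - apply csub_int_glb; [eapply csub_trans; [apply csub_int_l|]; auto | apply csub_int_r].
  - rewrite (T_ext r (lbl_ty r1 ++ L) (lbl_ty r2 ++ L)).
    + apply csub_int_glb; [apply csub_int_l|eapply csub_trans; [apply csub_int_r|]; auto].
    + intros l. rewrite !existsb_app. f_equal.
      assert (K3 : incl (lbl_ty r2) (lbl_ty r1)) by (apply sub_lbl; assumption).
      assert (K4 : incl (lbl_ty r1) (lbl_ty r2)) by (apply sub_lbl; assumption).
      apply eq_true_iff_eq. rewrite !memb_In. split; auto.
Qed.

Definition dropI (L : list label) (x : cty) : cty :=
  (fix dI x := match x with
  | CCons (CLab l) b => if existsb (Nat.eqb l) L then COmega else x
  | CInt a b => CInt (dI a) (dI b)
  | _ => x end) x.

Fixpoint dropO (L : list label) (x : cty) : cty :=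
  match x with
  | CCons CRec y => CCons CRec (dropI L y)
  | CInt a b => CInt (dropO L a) (dropO L b)
  | _ => x end.

Lemma dropI_mono : forall L x y, csub x y -> csub (dropI L x) (dropI L y).
Proof.
  intros L x y H; induction H; simpl.
  - apply csub_refl.
  - eapply csub_trans; eauto.
  - apply csub_omega.
  - apply csub_omega_arr.
  - apply csub_int_l.
  - apply csub_int_r.
  - apply csub_int_glb; auto.
  - apply csub_arr_dist.
  - apply csub_arr; auto.
  - destruct c; [apply csub_cons; auto|].
    destruct existsb; [apply csub_refl|apply csub_cons; auto].
  - destruct c; [apply csub_cons_int|].
    destruct existsb; [apply csub_int_l|apply csub_cons_int].
Qed.

Lemma dropO_mono : forall L x y, csub x y -> csub (dropO L x) (dropO L y).
Proof.
  intros L x y H; induction H; simpl.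
  - apply csub_refl.
  - eapply csub_trans; eauto.
  - apply csub_omega.
  - apply csub_omega_arr.
  - apply csub_int_l.
  - apply csub_int_r.
  - apply csub_int_glb; auto.
  - apply csub_arr_dist.
  - apply csub_arr; auto.
  - destruct c; [apply csub_cons, dropI_mono; auto|apply csub_cons; auto].
  - destruct c; [apply csub_cons_int|apply csub_cons_int].
Qed.

Lemma dropO_T : forall r L L', is_rty r = true -> dropO L (T L' r) = T (L' ++ L) r.
Proof.
  induction r; simpl; intros L L' H; try discriminate.
  - apply andb_true_iff in H as [H1 H2]. rewrite IHr1, IHr2; auto.
  - reflexivity.
  - unfold label in *. rewrite existsb_app. destruct (existsb (Nat.eqb l) L'); simpl; auto; destruct (existsb (Nat.eqb l) L); auto.
  - apply andb_true_iff in H as [H1 H2]. rewrite IHr1, IHr2, app_assoc; auto.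
Qed.

Inductive GB (Ls : list label) (k : nat) : cty -> Prop :=
| gb_empty : GB Ls k (CCons CRec COmega)
| gb_field l b : In l Ls -> level b <= k -> GB Ls k (CCons CRec (CCons (CLab l) b))
| gb_int x y : GB Ls k x -> GB Ls k y -> GB Ls k (CInt x y).

Lemma GB_dropO : forall Ls k L x, GB Ls k x -> GB Ls k (dropO L x).
Proof.
  induction 1; simpl.
  - constructor.
  - destruct existsb; constructor; auto.
  - constructor; auto.
Qed.

Lemma tr_T : forall Ls s c, tr Ls s = Some c -> T [] s = c.
Proof.
  induction s; simpl; intros c H; try congruence.
  - destruct (tr Ls s1) eqn:E1; destruct (tr Ls s2) eqn:E2; try discriminate.
    inversion H; subst. rewrite (IHs1 _ eq_refl), (IHs2 _ eq_refl); auto.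
  - destruct (tr Ls s1) eqn:E1; destruct (tr Ls s2) eqn:E2; try discriminate.
    inversion H; subst. rewrite (IHs1 _ eq_refl), (IHs2 _ eq_refl); auto.
  - destruct existsb; [|discriminate]. destruct (tr Ls s) eqn:E; [|discriminate].
    inversion H; subst. rewrite (IHs _ eq_refl); auto.
Qed.

Lemma trd_T : forall Ls s, tr_defined Ls s -> trd Ls s = T [] s.
Proof.
  intros Ls s H. unfold trd. destruct (tr Ls s) eqn:E; [|congruence].
  symmetry; eapply tr_T; eauto.
Qed.

Lemma tr_defined_arr : forall Ls a b, tr_defined Ls (TArr a b) -> tr_defined Ls a /\ tr_defined Ls b.
Proof.
  unfold tr_defined; simpl; intros Ls a b H.
  destruct (tr Ls a); destruct (tr Ls b); split; congruence.
Qed.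

Lemma GB_T : forall Ls k r, is_rty r = true -> tr_defined Ls r -> level (T [] r) <= k ->
  GB Ls k (T [] r).
Proof.
  unfold tr_defined. induction r; simpl; intros H Hd Hl; try discriminate.
  - apply andb_true_iff in H as [H1 H2].
    destruct (tr Ls r1); destruct (tr Ls r2); try congruence.
    constructor; [apply IHr1|apply IHr2]; auto; try congruence; lia.
  - constructor.
  - destruct (existsb (Nat.eqb l) Ls) eqn:E; [|congruence].
    constructor; [apply memb_In; auto|lia].
  - congruence.
Qed.

Lemma csubst_T : forall S L s, csubst S (T L s) = T L s.
Proof.
  intros S L s; revert L; induction s; simpl; intros L; auto.
  - rewrite IHs1, IHs2; auto.
  - rewrite IHs1, IHs2; auto.
  - destruct existsb; simpl; auto. rewrite IHs; auto.
  - rewrite IHs1, IHs2; auto.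
Qed.

Lemma csubst_mono : forall S x y, csub x y -> csub (csubst S x) (csubst S y).
Proof.
  intros S x y H; induction H; simpl; try (constructor; auto; fail).
  eapply csub_trans; eauto.
Qed.

Lemma fold_base : forall (g : label -> cty) ls base,
  csub (fold_left (fun acc l => CInt acc (g l)) ls base) base.
Proof.
  induction ls; simpl; intros base; [apply csub_refl|].
  eapply csub_trans; [apply IHls|apply csub_int_l].
Qed.

Lemma fold_in : forall (g : label -> cty) ls base l, In l ls ->
  csub (fold_left (fun acc l => CInt acc (g l)) ls base) (g l).
Proof.
  induction ls; simpl; intros base l Hin; [contradiction|].
  destruct Hin as [<-|Hin]; auto.
  eapply csub_trans; [apply fold_base|apply csub_int_r].
Qed.

Lemma var_gen : forall G P t, typed G P t -> forall x A, P = Var x ->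
  (forall u, In (x, u) G -> u = A) -> wf_ty A = true -> sub A t \/ sub TOmega t.
Proof.
  induction 1; intros x0 A HP HG HA; try discriminate.
  - inversion HP; subst. left. rewrite (HG s H). apply sub_refl; auto.
  - destruct (IHtyped1 x0 A HP HG HA) as [H1|H1];
    destruct (IHtyped2 x0 A HP HG HA) as [H2|H2].
    + left; apply sub_int_glb; auto.
    + left; apply sub_int_glb; auto. eapply sub_trans; [apply sub_omega; auto|auto].
    + left; apply sub_int_glb; auto. eapply sub_trans; [apply sub_omega; auto|auto].
    + right; apply sub_int_glb; auto.
  - right; apply sub_refl; reflexivity.
  - destruct (IHtyped x0 A HP HG HA) as [H1|H1]; [left|right]; eapply sub_trans; eauto.
Qed.

Lemma app_gen : forall G P t, typed G P t -> forall f N A D Cd, P = App (Var f) N ->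
  (forall u, In (f, u) G -> u = A) -> wf_ty A = true -> A = TArr D Cd ->
  sub TOmega t \/ (typed G N D /\ sub Cd t).
Proof.
  induction 1; intros f N0 A D Cd HP HG HA HAe; try discriminate.
  - inversion HP; subst.
    assert (HwA := HA). simpl in HwA. apply andb_true_iff in HwA as [HwD HwC].
    destruct (var_gen _ _ _ H f _ eq_refl HG HA) as [Hs|Hs].
    + destruct (arr_inv _ _ _ _ Hs) as [[H1 H2]|H1].
      * right; split; auto. eapply ty_sub; eauto.
      * left; auto.
    + left. eapply omega_arr_inv; eauto.
  - subst A. assert (HwA := HA). simpl in HwA. apply andb_true_iff in HwA as [HwD HwC].
    destruct (IHtyped1 f N0 _ D Cd HP HG HA eq_refl) as [H1|[HN H1]];
    destruct (IHtyped2 f N0 _ D Cd HP HG HA eq_refl) as [H2|[HN' H2]].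
    + left; apply sub_int_glb; auto.
    + right; split; auto. apply sub_int_glb; auto. eapply sub_trans; [apply sub_omega; auto|auto].
    + right; split; auto. apply sub_int_glb; auto. eapply sub_trans; [apply sub_omega; auto|auto].
    + right; split; auto. apply sub_int_glb; auto.
  - left; apply sub_refl; reflexivity.
  - destruct (IHtyped f N0 A D Cd HP HG HA HAe) as [H1|[H2 H1]].
    + left; eapply sub_trans; eauto.
    + right; split; auto; eapply sub_trans; eauto.
Qed.

Definition Inv Ls k Dl G P E := forall s' r', is_rty r' = true -> typed G P (TArr s' r') ->
  exists b, GB Ls k b /\ csub b (T [] r') /\ ctyped Dl k E (CArr (T [] s') b).

Lemma base_inv : forall Ls k Dl G C x sC rC,
  In (C, trd Ls (TArr sC rC)) Dl -> tr_defined Ls (TArr sC rC) ->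
  wf_ty sC = true -> is_rty rC = true -> level (T [] rC) <= k ->
  (forall u, In (x, u) G -> u = TArr sC rC) ->
  Inv Ls k Dl G (Var x) (Comb C).
Proof.
  intros Ls k Dl G C x sC rC HIn Hd HwC HrC Hl HG s' r' Hr' Hty.
  assert (HwA : wf_ty (TArr sC rC) = true) by (simpl; rewrite HwC, rty_wf; auto).
  destruct (var_gen _ _ _ Hty x _ eq_refl HG HwA) as [Hs|Hs].
  - destruct (arr_inv _ _ _ _ Hs) as [[H1 H2]|H1]; [|exfalso; eapply no_omega_rty; eauto].
    exists (T [] rC); split; [|split].
    + apply GB_T; auto. apply (tr_defined_arr _ _ _ Hd).
    + apply T_sub; auto.
    + assert (HC := cty_var Dl k C _ CTVar HIn (fun a => le_0_n k)).
      rewrite trd_T in HC; auto. rewrite csubst_T in HC. simpl in HC.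
      eapply cty_sub; [exact HC|]. apply csub_arr; [apply T_sub; auto|apply csub_refl].
  - exfalso. apply omega_arr_inv in Hs. eapply no_omega_rty; eauto.
Qed.

Lemma step_inv : forall Ls k Dl G M E P r sM r1 r2 x,
  In (M, mixin_cty Ls sM r1 r2) Dl -> wf_ty sM = true -> is_rty r1 = true -> is_rty r2 = true ->
  tr_defined Ls sM -> tr_defined Ls r1 -> tr_defined Ls r2 -> level (T [] r2) <= k ->
  is_rty r = true ->
  (forall u, In (x, u) G -> u = TArr (TArr sM (TInt r r1)) (TArr sM (TPlus r r2))) ->
  Inv Ls k Dl G P E -> Inv Ls k Dl G (App (Var x) P) (CApp (Comb M) E).
Proof.
  intros Ls k Dl G M E P r sM r1 r2 x HIn HwM Hr1 Hr2 Hd0 Hd1 Hd2 Hl Hr HG IH s' r' Hr' Hty.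
  assert (HwA : wf_ty (TArr (TArr sM (TInt r r1)) (TArr sM (TPlus r r2))) = true)
    by (simpl; rewrite HwM, Hr, Hr2, (rty_wf r), (rty_wf r1); auto).
  destruct (app_gen _ _ _ Hty x P _ _ _ eq_refl HG HwA eq_refl) as [Hom|[HtyP Hsub]].
  { exfalso. apply omega_arr_inv in Hom. eapply no_omega_rty; eauto. }
  destruct (arr_inv _ _ _ _ Hsub) as [[Hs Hrr]|Hom]; [|exfalso; eapply no_omega_rty; eauto].
  destruct (IH sM (TInt r r1)) as [b [Hgb [Hb HE]]]; [simpl; rewrite Hr, Hr1; auto|auto|].
  set (g := fun l => CArr (CArr (trd Ls sM) (CCons CRec (CCons (CLab l) (CTVar l))))
                      (CArr (trd Ls sM) (CCons CRec (CCons (CLab l) (CTVar l))))).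
  set (Lf := filter (fun l => negb (existsb (Nat.eqb l) (lbl_ty r2))) Ls).
  set (base := CArr (CArr (trd Ls sM) (trd Ls r1)) (CArr (trd Ls sM) (trd Ls r2))).
  assert (Hmix : mixin_cty Ls sM r1 r2 = fold_left (fun acc l => CInt acc (g l)) Lf base)
    by reflexivity.
  assert (HMb : ctyped Dl k (Comb M) (CArr (CArr (T [] sM) (T [] r1)) (CArr (T [] sM) (T [] r2)))).
  { assert (HC := cty_var Dl k M _ CTVar HIn (fun a => le_0_n k)).
    eapply cty_sub; [exact HC|]. rewrite Hmix.
    eapply csub_trans; [apply csubst_mono, fold_base|].
    unfold base. rewrite !trd_T by auto. simpl. rewrite !csubst_T. apply csub_refl. }
  assert (HE1 : ctyped Dl k E (CArr (T [] sM) (T [] r1))).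
  { eapply cty_sub; [exact HE|]. apply csub_arr; [apply csub_refl|].
    eapply csub_trans; [exact Hb|]. simpl. apply csub_int_r. }
  assert (HME2 : ctyped Dl k (CApp (Comb M) E) (CArr (T [] sM) (T [] r2)))
    by (eapply cty_app; eauto).
  assert (Hfield : forall b, GB Ls k b -> ctyped Dl k E (CArr (T [] sM) b) ->
     ctyped Dl k (CApp (Comb M) E) (CArr (T [] sM) (dropO (lbl_ty r2) b))).
  { clear b Hgb Hb HE. intros b Hgb. induction Hgb; intros HE.
    - simpl. eapply cty_sub; [exact HME2|]. apply csub_arr; [apply csub_refl|].
      apply rty_T_le; auto.
    - simpl. destruct (existsb (Nat.eqb l) (lbl_ty r2)) eqn:El.
      + eapply cty_sub; [exact HME2|]. apply csub_arr; [apply csub_refl|].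
        apply rty_T_le; auto.
      + set (S := fun a => if Nat.eqb a l then b else CTVar a).
        assert (HS : forall a, level (S a) <= k).
        { intros a; unfold S; destruct (Nat.eqb a l); simpl; lia. }
        assert (HC := cty_var Dl k M _ S HIn HS).
        assert (Hin : In l Lf).
        { unfold Lf. apply filter_In; split; auto. rewrite El; auto. }
        eapply cty_app; [|exact HE].
        eapply cty_sub; [exact HC|]. rewrite Hmix.
        eapply csub_trans; [apply csubst_mono, (fold_in g Lf base l Hin)|].
        unfold g. rewrite !trd_T by auto. simpl. rewrite !csubst_T.
        unfold S. rewrite Nat.eqb_refl. apply csub_refl.
    - simpl.
      assert (Hx : ctyped Dl k E (CArr (T [] sM) x0)).
      { eapply cty_sub; [exact HE|]. apply csub_arr; [apply csub_refl|apply csub_int_l]. }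
      assert (Hy : ctyped Dl k E (CArr (T [] sM) y)).
      { eapply cty_sub; [exact HE|]. apply csub_arr; [apply csub_refl|apply csub_int_r]. }
      eapply cty_sub; [apply cty_int; [apply IHHgb1; exact Hx|apply IHHgb2; exact Hy]|].
      apply csub_arr_dist. }
  exists (CInt (T [] r2) (dropO (lbl_ty r2) b)); split; [|split].
  - constructor; [apply GB_T; auto|apply GB_dropO; auto].
  - eapply csub_trans; [|apply (T_sub _ _ Hrr [])]. simpl. rewrite app_nil_r.
    apply csub_int_glb; [|apply csub_int_l].
    eapply csub_trans; [apply csub_int_r|].
    eapply csub_trans; [apply dropO_mono, Hb|]. simpl.
    eapply csub_trans; [apply csub_int_l|]. rewrite dropO_T by auto. apply csub_refl.
  - eapply cty_sub; [apply cty_int; [exact HME2|exact (Hfield b Hgb HE)]|].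
    eapply csub_trans; [apply csub_arr_dist|].
    apply csub_arr; [apply T_sub; auto|apply csub_refl].
Qed.

Lemma fold_inv : forall Ls k Dl G (xM : term -> ty -> var) mixs P E,
  (forall p, In p mixs -> forall P E, Inv Ls k Dl G P E ->
     Inv Ls k Dl G (App (Var (xM (fst p) (snd p))) P) (CApp (Comb (fst p)) E)) ->
  Inv Ls k Dl G P E ->
  Inv Ls k Dl G (fold_left (fun acc f => App (Var f) acc) (map (fun p => xM (fst p) (snd p)) mixs) P)
    (fold_left (fun acc M => CApp (Comb M) acc) (map fst mixs) E).
Proof.
  induction mixs; simpl; intros P E Hst HI; auto.
Qed.

Theorem theorem5p5
  (Ls : list label) (Cs Ms : list term)
  (sigC rhoC sigM rho1M rho2M : term -> ty)
  (* setting: classes *)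
  (HC : forall C, In C Cs ->
     is_class C /\ wf_ty (sigC C) = true /\ is_rty (rhoC C) = true /\
     tr_defined Ls (TArr (sigC C) (rhoC C)) /\
     typed [] C (TArr (sigC C) (rhoC C)))
  (* setting: mixins *)
  (HM : forall M, In M Ms ->
     is_mixin M /\ wf_ty (sigM M) = true /\
     is_rty (rho1M M) = true /\ is_rty (rho2M M) = true /\
     tr_defined Ls (sigM M) /\ tr_defined Ls (rho1M M) /\ tr_defined Ls (rho2M M) /\
     (forall r, is_rty r = true ->
        typed [] M (TArr (TArr (sigM M) (TInt r (rho1M M)))
                         (TArr (sigM M) (TPlus r (rho2M M))))) /\
     lbl_ty (rho2M M) <> [] /\ incl (lbl_ty (rho2M M)) Ls)
  (* distinct term variables x_C and x^rho_M *)
  (xC : term -> var) (xM : term -> ty -> var)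
  (HxC : forall C C', In C Cs -> In C' Cs -> xC C = xC C' -> C = C')
  (HxM : forall M M' r r', In M Ms -> In M' Ms -> is_rty r = true -> is_rty r' = true ->
     xM M r = xM M' r' -> M = M' /\ r = r')
  (HxCM : forall C M r, In C Cs -> In M Ms -> xC C <> xM M r)
  (* the basis Gamma *)
  (G : basis)
  (HG : forall p, In p G ->
     (exists C, In C Cs /\ p = (xC C, TArr (sigC C) (rhoC C))) \/
     (exists M r, In M Ms /\ is_rty r = true /\ tr_defined Ls r /\
        p = (xM M r, TArr (TArr (sigM M) (TInt r (rho1M M)))
                          (TArr (sigM M) (TPlus r (rho2M M))))))
  (sigma rho : ty)
  (Hsig : wf_ty sigma = true) (Hrho : is_rty rho = true)
  (Hdef : tr_defined Ls (TArr sigma rho))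
  (k : nat)
  (Hk : k = list_max (map (fun C => level (trd Ls (rhoC C))) Cs ++
                      map (fun M => level (trd Ls (rho2M M))) Ms ++
                      [level (trd Ls rho)]))
  (C : term) (HCin : In C Cs)
  (mixs : list (term * ty))
  (Hmixs : forall p, In p mixs ->
     In (fst p) Ms /\ is_rty (snd p) = true /\ tr_defined Ls (snd p)) :
  typed G (pipe_vars (xC C) (map (fun p => xM (fst p) (snd p)) mixs)) (TArr sigma rho) ->
  ctyped (repo Ls Cs Ms sigC rhoC sigM rho1M rho2M) k
         (pipe_combs C (map fst mixs)) (trd Ls (TArr sigma rho)).
Proof.
  intros Hty.
  assert (list_le : forall x l, In x l -> x <= list_max l).
  { intros x0 l Hin. assert (HF := proj1 (list_max_le l (list_max l)) (le_n _)).
    rewrite Forall_forall in HF. auto. }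
  destruct (HC C HCin) as [_ [HwC [HrC [HdC _]]]].
  assert (HdrC := proj2 (tr_defined_arr _ _ _ HdC)).
  assert (Hk1 : level (T [] (rhoC C)) <= k).
  { rewrite Hk, <- (trd_T Ls (rhoC C)) by auto. apply list_le.
    apply in_or_app; left. apply (in_map (fun C => level (trd Ls (rhoC C)))); auto. }
  assert (HI0 : Inv Ls k (repo Ls Cs Ms sigC rhoC sigM rho1M rho2M) G (Var (xC C)) (Comb C)).
  { apply (base_inv _ _ _ _ C (xC C) (sigC C) (rhoC C)); auto.
    - unfold repo. apply in_or_app; left.
      apply (in_map (fun C => (C, trd Ls (TArr (sigC C) (rhoC C))))); auto.
    - intros u Hu. destruct (HG _ Hu) as [[C' [HC' He]]|[M [r [HM' [Hr [_ He]]]]]];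
        injection He; intros Hu' Hx.
      + rewrite (HxC C C' HCin HC' Hx) ; auto.
      + exfalso; exact (HxCM C M r HCin HM' Hx). }
  assert (Hst : forall p, In p mixs -> forall P E,
     Inv Ls k (repo Ls Cs Ms sigC rhoC sigM rho1M rho2M) G P E ->
     Inv Ls k (repo Ls Cs Ms sigC rhoC sigM rho1M rho2M) G
       (App (Var (xM (fst p) (snd p))) P) (CApp (Comb (fst p)) E)).
  { intros p Hp P E HI. destruct (Hmixs p Hp) as [HMp [Hrp Hdp]].
    destruct (HM _ HMp) as [_ [HwM [Hr1 [Hr2 [Hd0 [Hd1 [Hd2 _]]]]]]].
    apply (step_inv Ls k _ G (fst p) E P (snd p) (sigM (fst p)) (rho1M (fst p)) (rho2M (fst p))); auto.
    - unfold repo. apply in_or_app; right.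
      apply (in_map (fun M => (M, mixin_cty Ls (sigM M) (rho1M M) (rho2M M)))); auto.
    - rewrite Hk, <- (trd_T Ls (rho2M (fst p))) by auto. apply list_le.
      apply in_or_app; right; apply in_or_app; left.
      apply (in_map (fun M => level (trd Ls (rho2M M)))); auto.
    - intros u Hu. destruct (HG _ Hu) as [[C' [HC' He]]|[M [r [HM' [Hr [_ He]]]]]];
        injection He; intros Hu' Hx.
      + exfalso; exact (HxCM C' (fst p) (snd p) HC' HMp (eq_sym Hx)).
      + destruct (HxM (fst p) M (snd p) r HMp HM' Hrp Hr Hx) as [E1 E2].
        subst; auto. }
  destruct (fold_inv _ _ _ _ xM mixs _ _ Hst HI0 sigma rho Hrho Hty) as [b [_ [Hb HE]]].
  rewrite trd_T by auto. simpl. unfold pipe_combs.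
  eapply cty_sub; [exact HE|]. apply csub_arr; [apply csub_refl|exact Hb].
Qed.
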